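(* Let $F_1,\dots,F_J:\mathbb{R}_+^N\to\mathbb{R}_+$ be upper semicontinuous, concave production functions that are homogeneous of degree 1 (i.e. $F_j(\lambda x)=\lambda F_j(x)$ for all $\lambda\ge 0$). Define the aggregate production function $F:\mathbb{R}_+^N\to\mathbb{R}_+$ by \[ F(x)=\max\Big\{\sum_{j=1}^J F_j(x_j): x_j\ge 0 \text{ for all } j,\ \sum_{j=1}^J x_j=x\Big\}. \] Take any $\bar{x}\in\mathbb{R}_{++}^N$ and let $w\in\mathbb{R}^N$ be a supergradient of $F$ at $\bar{x}$, that is, $F(x)-F(\bar{x})\le \langle w, x-\bar{x}\rangle$ for all $x\in\mathbb{R}_+^N$. Let $(\bar{x}_j)_{j=1}^J$ with $\bar{x}_j\ge 0$ and $\sum_{j=1}^J\bar{x}_j=\bar{x}$ be a solution of the maximization problem defining $F(\bar{x})$, and let $C$ be the smallest convex cone containing $\{\bar{x}_1,\dots,\bar{x}_J\}$. Then $F(x)=w\cdot x$ for all $x\in C$.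
   Context: $N$ inputs and one output; a production function is an upper semicontinuous map $\mathbb{R}_+^N\to\mathbb{R}_+$. There are $J$ firms with production functions $F_j$, and the aggregate production function $F$ is the maximum total output achievable by allocating the total input vector across firms. $w\cdot x$ and $\langle w,x\rangle$ denote the inner product. A set is a cone if it is closed under multiplication by nonnegative scalars. *)

(* Defs.v *)
From mathcomp Require Import all_boot all_order all_algebra.
From mathcomp Require Import boolp classical_sets reals.
Set Implicit Arguments. Unset Strict Implicit. Unset Printing Implicit Defensive.
Import Order.TTheory GRing.Theory Num.Theory.
Local Open Scope ring_scope.
Local Open Scope classical_set_scope.

Definition nonneg {R : realType} {N : nat} (x : 'I_N -> R) : Prop :=
  forall i, 0 <= x i.

Definition strictly_pos {R : realType} {N : nat} (x : 'I_N -> R) : Prop :=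
  forall i, 0 < x i.

Definition dotv {R : realType} {N : nat} (w x : 'I_N -> R) : R :=
  \sum_(i < N) w i * x i.

Definition usc_on_nonneg {R : realType} {N : nat} (f : ('I_N -> R) -> R) : Prop :=
  forall x, nonneg x -> forall e : R, 0 < e ->
    exists d : R, 0 < d /\
      forall y, nonneg y -> (forall i, `|y i - x i| < d) -> f y < f x + e.

Definition concave_on_nonneg {R : realType} {N : nat} (f : ('I_N -> R) -> R) : Prop :=
  forall x y (t : R), nonneg x -> nonneg y -> 0 <= t -> t <= 1 ->
    t * f x + (1 - t) * f y <= f (fun i => t * x i + (1 - t) * y i).

Definition homogeneous1 {R : realType} {N : nat} (f : ('I_N -> R) -> R) : Prop :=
  forall (l : R) x, 0 <= l -> nonneg x -> f (fun i => l * x i) = l * f x.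

Definition production_function {R : realType} {N : nat} (f : ('I_N -> R) -> R) : Prop :=
  (forall x, nonneg x -> 0 <= f x) /\ usc_on_nonneg f.

Definition allocation {R : realType} {N J : nat}
  (x : 'I_N -> R) (xs : 'I_J -> 'I_N -> R) : Prop :=
  (forall j, nonneg (xs j)) /\ (forall i, \sum_(j < J) xs j i = x i).

Definition total_output {R : realType} {N J : nat}
  (Fs : 'I_J -> ('I_N -> R) -> R) (xs : 'I_J -> 'I_N -> R) : R :=
  \sum_(j < J) Fs j (xs j).

(* Aggregate production function: the value of the maximization problem
   (written as a supremum; the maximum is attained under the hypotheses). *)
Definition aggregate {R : realType} {N J : nat}
  (Fs : 'I_J -> ('I_N -> R) -> R) (x : 'I_N -> R) : R :=
  sup [set v : R | exists xs, allocation x xs /\ v = total_output Fs xs].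

Definition supergradient_at {R : realType} {N : nat}
  (f : ('I_N -> R) -> R) (xbar w : 'I_N -> R) : Prop :=
  forall x, nonneg x -> f x - f xbar <= dotv w (fun i => x i - xbar i).

Definition is_cone {R : realType} {N : nat} (S : set ('I_N -> R)) : Prop :=
  forall (l : R) x, 0 <= l -> S x -> S (fun i => l * x i).

Definition is_convex {R : realType} {N : nat} (S : set ('I_N -> R)) : Prop :=
  forall x y (t : R), S x -> S y -> 0 <= t -> t <= 1 ->
    S (fun i => t * x i + (1 - t) * y i).

Definition convex_cone_hull {R : realType} {N J : nat}
  (p : 'I_J -> 'I_N -> R) : set ('I_N -> R) :=
  [set x | forall S : set ('I_N -> R),
      is_cone S -> is_convex S -> (forall j, S (p j)) -> S x].

(* Main.v *)
Require Import Defs.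
From mathcomp Require Import all_boot all_order all_algebra.
From mathcomp Require Import boolp classical_sets reals.
From mathcomp Require Import lra.
Import Order.TTheory GRing.Theory Num.Theory.
Local Open Scope ring_scope.
Local Open Scope classical_set_scope.

Section Aux.
Context {R : realType} {N J : nat} {Fs : 'I_J -> ('I_N -> R) -> R}.
Hypothesis hprod : forall j, production_function (Fs j).
Hypothesis hconc : forall j, concave_on_nonneg (Fs j).
Hypothesis hhom : forall j, homogeneous1 (Fs j).

Lemma F0 j : Fs j (fun _ => 0) = 0.
Proof.
have -> : (fun _ : 'I_N => 0 : R) = (fun i => 0 * (fun _ : 'I_N => 0 : R) i).
  by apply/funext => i; rewrite mul0r.
by rewrite hhom // ?mul0r // => i.
Qed.

Lemma superadd j (a b : 'I_N -> R) : nonneg a -> nonneg b ->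
  Fs j a + Fs j b <= Fs j (fun i => a i + b i).
Proof.
move=> ha hb.
have h := @hconc j a b (1/2) ha hb.
have h2 : (0:R) <= 1/2 by rewrite divr_ge0.
have h3 : (1/2:R) <= 1 by rewrite ler_pdivrMr // mul1r ler1n.
move: (h h2 h3).
set c := (fun i => _).
have hc : nonneg c.
  move=> i; rewrite /c addr_ge0 // mulr_ge0 // subr_ge0 //.
have -> : (fun i => a i + b i) = (fun i => 2 * c i).
  apply/funext => i; rewrite /c; lra.
rewrite hhom // => hle.
have -> : Fs j a + Fs j b = 2 * (1/2 * Fs j a + (1 - 1/2) * Fs j b).
  lra.
by rewrite ler_pM2l.
Qed.

Lemma monoF j (a b : 'I_N -> R) : nonneg a -> (forall i, a i <= b i) -> Fs j a <= Fs j b.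
Proof.
move=> ha hab.
have hd : nonneg (fun i => b i - a i) by move=> i; rewrite subr_ge0.
have := @superadd j a _ ha hd.
have -> : (fun i => a i + (b i - a i)) = b by apply/funext => i; rewrite addrC subrK.
have := (hprod j).1 _ hd.
move=> h1 h2; apply: le_trans h2; rewrite lerDl //.
Qed.

Definition outset (x : 'I_N -> R) :=
  [set v : R | exists xs, allocation x xs /\ v = total_output Fs xs].

Lemma alloc_le {x : 'I_N -> R} {xs : 'I_J -> 'I_N -> R} : allocation x xs -> forall j i, xs j i <= x i.
Proof.
case=> hn hs j i; rewrite -hs (bigD1 j) //= lerDl sumr_ge0 // => k _; exact: hn.
Qed.

Lemma alloc_nonneg {x : 'I_N -> R} {xs : 'I_J -> 'I_N -> R} : allocation x xs -> nonneg x.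
Proof. case=> hn hs i; rewrite -hs sumr_ge0 // => k _; exact: hn. Qed.

Lemma outset_ub {x : 'I_N -> R} : nonneg x -> has_ubound (outset x).
Proof.
move=> hx; exists (\sum_(j < J) Fs j x) => v [xs [hal ->]].
rewrite /total_output; apply: ler_sum => j _; apply: monoF.
  exact: hal.1.
exact: alloc_le.
Qed.

Lemma le_agg {x : 'I_N -> R} {xs : 'I_J -> 'I_N -> R} : allocation x xs -> total_output Fs xs <= aggregate Fs x.
Proof.
move=> hal; have hm : outset x (total_output Fs xs) by exists xs.
exact: (ub_le_sup (outset_ub (alloc_nonneg hal)) hm).
Qed.

Lemma alloc_scale {t : R} {y : 'I_N -> R} {ys : 'I_J -> 'I_N -> R} : 0 <= t -> allocation y ys ->
  allocation (fun i => t * y i) (fun j i => t * ys j i).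
Proof.
move=> ht [hn hs]; split.
  by move=> j i; rewrite mulr_ge0 //; exact: hn.
by move=> i; rewrite -mulr_sumr hs.
Qed.

Lemma total_scale {t : R} {ys : 'I_J -> 'I_N -> R} : 0 <= t -> (forall j, nonneg (ys j)) ->
  total_output Fs (fun j i => t * ys j i) = t * total_output Fs ys.
Proof.
move=> ht hn; rewrite /total_output mulr_sumr; apply: eq_bigr => j _.
by rewrite hhom.
Qed.

Lemma dot_lin (w y z : 'I_N -> R) (t : R) :
  dotv w (fun i => t * y i - z i) = t * dotv w y - dotv w z.
Proof.
rewrite /dotv mulr_sumr -sumrB; apply: eq_bigr => i _.
by rewrite mulrBr mulrCA.
Qed.

End Aux.

Theorem theorem2 (R : realType) (N J : nat)
  (Fs : 'I_J -> ('I_N -> R) -> R)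
  (hprod : forall j, production_function (Fs j))
  (hconc : forall j, concave_on_nonneg (Fs j))
  (hhom : forall j, homogeneous1 (Fs j))
  (xbar : 'I_N -> R) (hxbar : strictly_pos xbar)
  (w : 'I_N -> R) (hw : supergradient_at (aggregate Fs) xbar w)
  (xbars : 'I_J -> 'I_N -> R) (hall : allocation xbar xbars)
  (hopt : total_output Fs xbars = aggregate Fs xbar) :
  forall x, convex_cone_hull xbars x -> aggregate Fs x = dotv w x.
Proof.
have key : forall y ys, allocation y ys -> total_output Fs ys <= dotv w y.
  move=> y ys hal; rewrite leNgt; apply/negP => hlt.
  set d := total_output Fs ys - dotv w y.
  have hd : 0 < d by rewrite subr_gt0.
  set c := aggregate Fs xbar - dotv w xbar.
  have H : forall t, 0 <= t -> t * d <= c.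
    move=> t ht.
    have hal' := alloc_scale ht hal.
    have h1 := le_agg hprod hconc hhom hal'.
    rewrite total_scale // in h1; last exact: hal.1.
    have h2 := hw _ (alloc_nonneg hal').
    rewrite dot_lin in h2.
    rewrite /d /c mulrBr; lra.
  have ht : 0 <= (`|c| + 1) / d by apply: divr_ge0; [rewrite addr_ge0 | exact: ltW].
  have := H _ ht; rewrite divfK ?gt_eqF //.
  have := ler_norm c; lra.
have hA0 : 0 <= aggregate Fs (fun _ => 0).
  have hal0 : allocation (fun _ : 'I_N => 0 : R) (fun (_ : 'I_J) (_ : 'I_N) => 0 : R).
    by split; [move=> j i | move=> i; rewrite big1].
  have := le_agg hprod hconc hhom hal0.
  by rewrite /total_output big1 // => j _; rewrite F0.
have hAx : aggregate Fs xbar = dotv w xbar.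
  apply/le_anti/andP; split; first by rewrite -hopt; exact: key.
  have := hw (fun _ => 0) (fun i => lexx 0).
  have -> : (fun i => 0 - xbar i) = (fun i => (-1) * xbar i - 0).
    by apply/funext => i; rewrite mulN1r sub0r subr0.
  rewrite dot_lin.
  have -> : dotv w (fun _ => 0) = 0 by rewrite /dotv big1 // => i _; rewrite mulr0.
  lra.
have hj : forall j, Fs j (xbars j) <= dotv w (xbars j).
  move=> j.
  pose xs := fun k i => if k == j then xbars j i else 0.
  have hal : allocation (xbars j) xs.
    split.
      move=> k i; rewrite /xs; case: eqP => _ //; exact: hall.1.
    move=> i; rewrite (bigD1 j) //= /xs eqxx big1 ?addr0 // => k /negbTE -> //.
  have := key _ _ hal; rewrite /total_output (bigD1 j) //= big1 ?addr0.
    by have -> : xs j = xbars j by apply/funext => i; rewrite /xs eqxx.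
  move=> k hk; have -> : xs k = fun _ => 0 by apply/funext => i; rewrite /xs (negbTE hk).
  exact: F0.
have hsum : dotv w xbar = \sum_(j < J) dotv w (xbars j).
  rewrite /dotv exchange_big /=; apply: eq_bigr => i _.
  by rewrite -hall.2 mulr_sumr.
have heq : forall j, Fs j (xbars j) = dotv w (xbars j).
  have h0 : \sum_(j < J) (dotv w (xbars j) - Fs j (xbars j)) = 0.
    by rewrite sumrB -hsum -hAx -hopt subrr.
  move=> j; apply/eqP; rewrite eq_sym -subr_eq0; apply/eqP.
  move: j isT; apply: psumr_eq0P h0 => j _; rewrite subr_ge0.
  exact: hj.
move=> x hx.
pose S := fun y : 'I_N -> R => exists l : 'I_J -> R, (forall j, 0 <= l j) /\
   y = fun i => \sum_(j < J) l j * xbars j i.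
have : S x.
  apply: hx.
  - move=> c y hc [l [hl ->]]; exists (fun j => c * l j); split.
      by move=> j; rewrite mulr_ge0.
    apply/funext => i; rewrite mulr_sumr; apply: eq_bigr => j _; by rewrite mulrA.
  - move=> y z t [l1 [hl1 ->]] [l2 [hl2 ->]] ht0 ht1.
    exists (fun j => t * l1 j + (1 - t) * l2 j); split.
      by move=> j; rewrite addr_ge0 // mulr_ge0 // subr_ge0.
    apply/funext => i; rewrite !mulr_sumr -big_split; apply: eq_bigr => j _.
    by rewrite [RHS]mulrDl !mulrA.
  - move=> j; exists (fun k => (k == j)%:R); split; first by move=> k; rewrite ler0n.
    apply/funext => i; rewrite (bigD1 j) //= eqxx mul1r big1 ?addr0 //.
    by move=> k /negbTE ->; rewrite mul0r.
move=> [l [hl ->]].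
pose xs := fun j i => l j * xbars j i.
have hal : allocation (fun i => \sum_(j < J) l j * xbars j i) xs.
  split; last by [].
  by move=> j i; rewrite /xs mulr_ge0 //; exact: hall.1.
have htot : total_output Fs xs = dotv w (fun i => \sum_(j < J) l j * xbars j i).
  rewrite /total_output /dotv.
  under [RHS]eq_bigr => i _ do rewrite mulr_sumr.
  rewrite [RHS]exchange_big /=; apply: eq_bigr => j _.
  rewrite /xs hhom //; last exact: hall.1.
  rewrite heq /dotv mulr_sumr; apply: eq_bigr => i _; by rewrite mulrCA.
apply/le_anti/andP; split.
  apply: ge_sup; first by exists (total_output Fs xs), xs.
  by move=> v [ys [hys ->]]; exact: key.
by rewrite -htot; exact: le_agg.
Qed.
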